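(* Let $\mathcal X$ be finite with $N=|\mathcal X|\ge2$, let $c\in(0,1/N]$ and $0\le\varepsilon<\log\frac{2}{Nc}$. Then $$\sup_{K\in\mathcal M_1(\varepsilon,c)}\eta_{\mathrm{TV}}(K)=\frac{e^\varepsilon-1}{e^\varepsilon(1-Nc)+1},$$ moreover $\sup_{K\in\mathcal M_2(\varepsilon,c)}\eta_{\mathrm{TV}}(K)\le\sup_{K\in\mathcal M_1(\varepsilon,c)}\eta_{\mathrm{TV}}(K)$ (whenever $\mathcal M_2(\varepsilon,c)\neq\emptyset$), and $\mathcal M_0(\varepsilon,c)=\emptyset$.
   Context: A kernel $K$ is a row-stochastic matrix with entries $K_{Y|X=x}(y)$, $(K\circ P_X)(y)=\sum_xK_{Y|X=x}(y)P_X(x)$. PML: $\ell_{K\times P_X}(X\to y)=\log\frac{\max_x K_{Y|X=x}(y)}{(K\circ P_X)(y)}$ for full-support $P_X$ and $(K\circ P_X)(y)>0$. $\mathcal Q_{\mathcal X}(c)=\{P_X:\min_xP_X(x)\ge c\}$; $C(K,\mathcal P)=\sup_{P_X\in\mathcal P}\sup_{y:(K\circ P_X)(y)>0}\ell_{K\times P_X}(X\to y)$; $\mathcal M(\varepsilon,c)$ is the set of kernels with $C(K,\mathcal Q_{\mathcal X}(c))\le\varepsilon$. $\mathcal S_{N,2}$ denotes the $N\times 2$ row-stochastic matrices (kernels to a binary output set $\mathcal Y$). $\mathcal T_0=\{K\in\mathcal S_{N,2}:\forall y\in\mathcal Y\ \exists x\in\mathcal X,\ K_{Y|X=x}(y)=0\}$,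 $\mathcal T_1=\{K\in\mathcal S_{N,2}: K_{Y|X=x}(y)>0\ \forall x,y\}$. Define $\mathcal M_0(\varepsilon,c)=\mathcal M(\varepsilon,c)\cap\mathcal T_0$, $\mathcal M_1(\varepsilon,c)=\mathcal M(\varepsilon,c)\cap\mathcal T_1$, $\mathcal M_2(\varepsilon,c)=(\mathcal M(\varepsilon,c)\cap\mathcal S_{N,2})\setminus(\mathcal M_0(\varepsilon,c)\cup\mathcal M_1(\varepsilon,c))$. $\eta_{\mathrm{TV}}(K)=\max_{x\ne x'}\mathrm{TV}(K_{Y|X=x}\|K_{Y|X=x'})$. *)

(* Defs.v *)
From HB Require Import structures.
From mathcomp Require Import all_boot all_order all_algebra.
From mathcomp Require Import boolp classical_sets reals.
From mathcomp.analysis Require Import sequences exp.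
Set Implicit Arguments. Unset Strict Implicit. Unset Printing Implicit Defensive.
Import Order.TTheory GRing.Theory Num.Theory.
Local Open Scope ring_scope.
Local Open Scope classical_set_scope.

Section Defs.
Variables (R : realType) (N : nat).

(* A kernel to the binary output set Y = 'I_2: K x y = K_{Y|X=x}(y). *)
Definition row_stochastic (K : 'M[R]_(N, 2)) : Prop :=
  (forall x y, 0 <= K x y) /\ (forall x, \sum_(y < 2) K x y = 1).

Definition S_N2 : set 'M[R]_(N, 2) := [set K | row_stochastic K].

Definition out_dist (K : 'M[R]_(N, 2)) (P : 'I_N -> R) (y : 'I_2) : R :=
  \sum_(x < N) K x y * P x.

(* max_x K_{Y|X=x}(y) (entries are nonnegative, so 0 is a neutral default) *)
Definition max_col (K : 'M[R]_(N, 2)) (y : 'I_2) : R :=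
  \big[Num.max/0]_(x < N) K x y.

Definition pml (K : 'M[R]_(N, 2)) (P : 'I_N -> R) (y : 'I_2) : R :=
  ln (max_col K y / out_dist K P y).

Definition Qc (c : R) : set ('I_N -> R) :=
  [set P | (forall x, 0 <= P x) /\ \sum_(x < N) P x = 1 /\ (forall x, c <= P x)].

Definition Cap (K : 'M[R]_(N, 2)) (Pset : set ('I_N -> R)) : R :=
  sup [set l | exists P y, Pset P /\ 0 < out_dist K P y /\ l = pml K P y].

(* M(eps, c) restricted to kernels to the binary output set *)
Definition M (eps c : R) : set 'M[R]_(N, 2) :=
  [set K | row_stochastic K /\ Cap K (Qc c) <= eps].

Definition T0 : set 'M[R]_(N, 2) :=
  [set K | row_stochastic K /\ forall y, exists x, K x y = 0].
Definition T1 : set 'M[R]_(N, 2) :=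
  [set K | row_stochastic K /\ forall x y, 0 < K x y].

Definition M0 eps c := M eps c `&` T0.
Definition M1 eps c := M eps c `&` T1.
Definition M2 eps c := (M eps c `&` S_N2) `\` (M0 eps c `|` M1 eps c).

Definition TV (K : 'M[R]_(N, 2)) (x x' : 'I_N) : R :=
  2^-1 * \sum_(y < 2) `|K x y - K x' y|.

Definition eta_TV (K : 'M[R]_(N, 2)) : R :=
  \big[Num.max/0]_(x < N) \big[Num.max/0]_(x' < N | x != x') TV K x x'.

End Defs.

(* Main.v *)
Require Import Defs.
From HB Require Import structures.
From mathcomp Require Import all_boot all_order all_algebra.
From mathcomp Require Import boolp classical_sets reals.
From mathcomp.analysis Require Import sequences exp.
From mathcomp Require Import ring lra.
Import Order.TTheory GRing.Theory Num.Theory.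
Local Open Scope ring_scope.
Local Open Scope classical_set_scope.

Section Aux.
Variables (R : realType) (N : nat).
Implicit Types (K : 'M[R]_(N,2)) (P : 'I_N -> R).

Lemma sum2 (F : 'I_2 -> R) : \sum_(y < 2) F y = F ord0 + F ord_max.
Proof. by rewrite big_ord_recr big_ord1; congr (_ + _); congr F; apply/val_inj. Qed.

Lemma col1 K : row_stochastic K -> forall x, K x ord_max = 1 - K x ord0.
Proof. by move=> [_ h] x; have := h x; rewrite sum2 => <-; ring. Qed.

Lemma sum_ge_term (F : 'I_N -> R) x : (forall i, 0 <= F i) -> F x <= \sum_i F i.
Proof.
move=> h; rewrite (bigD1 x) //= lerDl; apply: sumr_ge0 => i _; exact: h.
Qed.

Lemma max_col_ge K y x : K x y <= max_col K y.
Proof. by rewrite /max_col (bigD1 x) //= le_max lexx. Qed.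

Definition Pc (c : R) (x' : 'I_N) : 'I_N -> R :=
  fun x => c + (1 - N%:R * c) * (x == x')%:R.

Lemma sum_ind (F : 'I_N -> R) x' : \sum_x F x * (x == x')%:R = F x'.
Proof.
rewrite (bigD1 x') //= eqxx mulr1 big1 ?addr0 // => x /negbTE ->; by rewrite mulr0.
Qed.

Lemma Pc_Qc c x' : 0 <= c -> N%:R * c <= 1 -> Qc c (Pc c x').
Proof.
move=> c0 Nc; rewrite /Qc /Pc /=; split; last split.
- move=> x; apply: addr_ge0 => //; apply: mulr_ge0; first by rewrite subr_ge0.
  by case: (x == x').
- rewrite big_split /= sumr_const card_ord.
  rewrite (sum_ind (fun _ => 1 - N%:R * c)) -mulr_natl; ring.
- move=> x; rewrite lerDl; apply: mulr_ge0; first by rewrite subr_ge0.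
  by case: (x == x').
Qed.

Lemma od_Pc K c x' y :
  out_dist K (Pc c x') y = c * \sum_x K x y + (1 - N%:R*c) * K x' y.
Proof.
rewrite /out_dist /Pc.
under eq_bigr => x _ do rewrite mulrDr.
rewrite big_split /= -big_distrl /= mulrC; congr (_ + _).
under eq_bigr => x _ do rewrite mulrA [_ * (1 - _)]mulrC -mulrA.
by rewrite -big_distrr /= sum_ind.
Qed.

Lemma od_lb K c P y n : Qc c P -> (forall x, n <= K x y) -> 0 <= n ->
  c * \sum_x K x y + n * (1 - N%:R * c) <= out_dist K P y.
Proof.
move=> [P0 [P1 Pc0]] hn n0; rewrite /out_dist.
have -> : \sum_x K x y * P x = c * \sum_x K x y + \sum_x K x y * (P x - c).
  rewrite mulr_sumr -big_split /=; apply: eq_bigr => x _; ring.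
rewrite lerD2l.
have -> : n * (1 - N%:R * c) = \sum_x n * (P x - c).
  rewrite -mulr_sumr sumrB P1 sumr_const card_ord -mulr_natr; ring.
apply: ler_sum => x _; apply: ler_wpM2r; [by rewrite subr_ge0 | exact: hn].
Qed.

Lemma od_ge_c K c P y x : Qc c P -> row_stochastic K -> c * K x y <= out_dist K P y.
Proof.
move=> [P0 [P1 Pc0]] [K0 _]; rewrite /out_dist.
apply: le_trans (sum_ge_term (fun x => K x y * P x) x _).
  by rewrite mulrC; apply: ler_wpM2l.
by move=> i; apply: mulr_ge0.
Qed.

Lemma Cap_bound K c P y : 0 < c -> row_stochastic K -> Qc c P ->
  0 < out_dist K P y -> pml K P y <= Cap K (Qc c).
Proof.
move=> c0 rs QP od0; apply: sup_upper_bound; last by exists P, y.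
split; first by exists (pml K P y), P, y.
exists c^-1 => l [P' [y' [QP' [od' ->]]]].
rewrite /pml; set r := _ / _.
have rle : r <= c^-1.
  rewrite /r ler_pdivrMr // mulrC.
  rewrite /max_col bigmax_le //; first by rewrite divr_ge0 // ltW.
  move=> x _; rewrite ler_pdivlMr // mulrC; exact: od_ge_c.
case: (lerP r 1) => hr; first by apply: le_trans (ln_le0 hr) _; rewrite invr_ge0 ltW.
by apply: le_trans rle; apply/ltW/ln_sublinear/(lt_trans ltr01).
Qed.

Lemma pml_exp K P y eps : pml K P y <= eps -> 0 < max_col K y -> 0 < out_dist K P y ->
  max_col K y <= expR eps * out_dist K P y.
Proof.
move=> h m0 od0; rewrite -ler_pdivrMr // -[_ / _]lnK ?ler_expR //.
by rewrite posrE divr_gt0.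
Qed.


Definition Dst (eps c : R) := (expR eps - 1) / (expR eps * (1 - N%:R * c) + 1).

Lemma key K c eps x x' : 0 < c -> N%:R * c <= 1 -> 0 <= eps ->
  row_stochastic K -> Cap K (Qc c) <= eps -> K x ord0 - K x' ord0 <= Dst eps c.
Proof.
move=> c0 Nc e0 rs hC.
have rs' := rs; case: rs' => [Kge0 _].
have e1 : 1 <= expR eps by apply: le_trans (expR_ge1Dx eps); rewrite lerDl.
have q0 : 0 <= 1 - N%:R * c by rewrite subr_ge0.
have den0 : 0 < expR eps * (1 - N%:R * c) + 1.
  by apply: ltr_wpDl; [apply: mulr_ge0 => //; apply: ltW; exact: expR_gt0 | exact: ltr01].
have D0 : 0 <= Dst eps c by rewrite /Dst divr_ge0 ?subr_ge0 // ltW.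
have c1 := col1 K rs.
have a1 : K x ord0 <= 1 by have := Kge0 x ord_max; rewrite c1 subr_ge0.
case: (lerP (K x ord0) 0) => ha.
  apply: le_trans D0; rewrite subr_le0; exact: le_trans ha (Kge0 _ _).
case: (lerP 1 (K x' ord0)) => hb.
  apply: le_trans D0; rewrite subr_le0; exact: le_trans a1 hb.
set S0 := \sum_i K i ord0; set S1 := \sum_i K i ord_max.
have hS : S0 + S1 = N%:R.
  rewrite /S0 /S1 -big_split /=.
  under eq_bigr => i _ do rewrite c1 addrC subrK.
  by rewrite sumr_const card_ord.
have QP1 := Pc_Qc c x' (ltW c0) Nc; have QP2 := Pc_Qc c x (ltW c0) Nc.
have od1 : 0 < out_dist K (Pc c x') ord0.
  apply: lt_le_trans (od_ge_c _ _ _ _ x QP1 rs); exact: mulr_gt0.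
have od2 : 0 < out_dist K (Pc c x) ord_max.
  apply: lt_le_trans (od_ge_c _ _ _ _ x' QP2 rs); rewrite c1; apply: mulr_gt0 => //.
  by rewrite subr_gt0.
have h1 := pml_exp _ _ _ _ (le_trans (Cap_bound _ _ _ _ c0 rs QP1 od1) hC)
   (lt_le_trans ha (max_col_ge K ord0 x)) od1.
have m2 : 0 < max_col K ord_max.
  by apply: lt_le_trans (max_col_ge K ord_max x'); rewrite c1 subr_gt0.
have h2 := pml_exp _ _ _ _ (le_trans (Cap_bound _ _ _ _ c0 rs QP2 od2) hC) m2 od2.
have h1' := le_trans (max_col_ge K ord0 x) h1.
have h2' := le_trans (max_col_ge K ord_max x') h2.
rewrite !od_Pc -/S0 -/S1 !c1 in h1' h2'.
rewrite /Dst ler_pdivlMr //.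
move: h1' h2'; rewrite (_ : S1 = N%:R - S0); last by rewrite -hS; ring.
move=> h1' h2'.
set e := expR eps in h1' h2' *; set a := K x ord0 in h1' h2' *; set b := K x' ord0 in h1' h2' *.
nra.
Qed.


Lemma sum_ind1 (x' : 'I_N) : \sum_x (x == x')%:R = 1 :> R.
Proof. by rewrite -[RHS](sum_ind (fun _ => 1) x'); apply: eq_bigr => x _; rewrite mul1r. Qed.

Lemma witness c eps (i0 i1 : 'I_N) (D : R) : i0 != i1 ->
  0 < c -> N%:R * c <= 1 -> 0 <= D -> D < 1 ->
  D * (expR eps * (1 - N%:R * c) + 1) = expR eps - 1 ->
  exists K, M1 eps c K /\ D <= eta_TV K.
Proof.
move=> i01 c0 Nc D0 D1 hD.
pose f x : R := 2^-1 + D / 2 * ((x == i0)%:R - (x == i1)%:R).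
pose K0 : 'M[R]_(N, 2) := \matrix_(x, y) (if y == ord0 then f x else 1 - f x).
have fb : forall x, (1 - D) / 2 <= f x <= (1 + D) / 2.
  move=> x; rewrite /f.
  case: (eqVneq x i0) => [e0|h0]; case: (eqVneq x i1) => [h1|h1] //=.
  - by move: i01; rewrite -e0 -h1 eqxx.
  - by apply/andP; split; lra.
  - by apply/andP; split; lra.
  - by apply/andP; split; lra.
have Kb : forall x y, (1 - D) / 2 <= K0 x y <= (1 + D) / 2.
  move=> x y; rewrite mxE; case: (y == ord0); first exact: fb.
  by have /andP[h1 h2] := fb x; apply/andP; split; lra.
have Kpos : forall x y, 0 < K0 x y.
  by move=> x y; have /andP[h _] := Kb x y; apply: lt_le_trans h; lra.
have sf : \sum_x f x = N%:R / 2.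
  rewrite /f big_split /= sumr_const card_ord -mulr_sumr sumrB.
  rewrite !sum_ind1.
  by rewrite subrr mulr0 addr0 [RHS]mulrC mulr_natr.
have colS : forall y, \sum_x K0 x y = N%:R / 2.
  move=> y; under eq_bigr => x _ do rewrite mxE.
  case: (y == ord0) => /=; first exact: sf.
  rewrite sumrB sf sumr_const card_ord; lra.
have rs : row_stochastic K0.
  split; first by move=> x y; apply: ltW.
  by move=> x; rewrite sum2 !mxE /=; ring.
have e0 : 0 < expR eps := expR_gt0 eps.
exists K0; split; last first.
  have i10 : i1 != i0 by rewrite eq_sym.
  have d0 : K0 i0 ord0 - K0 i1 ord0 = D.
    by move: (i01) (i10); rewrite !mxE /= /f !eqxx => /negbTE -> /negbTE -> /=; field.
  have d1 : K0 i0 ord_max - K0 i1 ord_max = - D.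
    by move: (i01) (i10); rewrite !mxE /= /f !eqxx => /negbTE -> /negbTE -> /=; field.
  have hTV : TV K0 i0 i1 = D.
    by rewrite /TV sum2 d0 d1 normrN ger0_norm //; field.
  apply: le_trans (_ : TV K0 i0 i1 <= _); first by rewrite hTV.
  by rewrite /eta_TV (bigD1 i0) //= le_max (bigD1 i1) //= le_max lexx.
have m0 : forall y, 0 < max_col K0 y.
  by move=> y; apply: lt_le_trans (max_col_ge K0 y i0).
have lo0 : 0 <= (1 - D) / 2 by lra.
have key2 : (1 + D) / 2 <= expR eps * (c * (N%:R / 2) + (1 - D) / 2 * (1 - N%:R * c)).
  nra.
have QP0 := Pc_Qc c i0 (ltW c0) Nc.
split; split => //; rewrite /Cap; apply: ge_sup.
  exists (pml K0 (Pc c i0) ord0), (Pc c i0), ord0; split => //; split => //.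
  apply: lt_le_trans (od_ge_c _ _ _ _ i0 QP0 rs); exact: mulr_gt0.
move=> l [P [y [QP [od ->]]]].
rewrite /pml -ler_expR lnK; last by rewrite posrE divr_gt0.
rewrite ler_pdivrMr //.
apply: le_trans (_ : (1 + D) / 2 <= _).
  rewrite /max_col bigmax_le //; first by lra.
  by move=> x _; have /andP[] := Kb x y.
apply: le_trans key2 _; apply: ler_wpM2l; first exact: ltW.
rewrite -(colS y); apply: od_lb => // x; by have /andP[] := Kb x y.
Qed.

Lemma eta_le K c eps : 0 < c -> N%:R * c <= 1 -> 0 <= eps ->
  M eps c K -> eta_TV K <= Dst eps c.
Proof.
move=> c0 Nc e0 [rs hC].
have e1 : 1 <= expR eps by apply: le_trans (expR_ge1Dx eps); rewrite lerDl.
have den0 : 0 < expR eps * (1 - N%:R * c) + 1.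
  apply: ltr_wpDl; [apply: mulr_ge0; [exact: ltW (expR_gt0 _)| by rewrite subr_ge0] | exact: ltr01].
have D0 : 0 <= Dst eps c by rewrite /Dst divr_ge0 ?subr_ge0 // ltW.
rewrite /eta_TV; apply: bigmax_le => // x _; apply: bigmax_le => // x' _.
have -> : TV K x x' = `|K x ord0 - K x' ord0|.
  rewrite /TV sum2 !(col1 K rs).
  have -> : 1 - K x ord0 - (1 - K x' ord0) = - (K x ord0 - K x' ord0) by ring.
  by rewrite normrN; field.
apply/ler_normlP; split; last exact: key.
rewrite opprB; exact: key.
Qed.

End Aux.

Theorem theorem3 (R : realType) (N : nat) (c eps : R) :
  (2 <= N)%N ->
  0 < c -> c <= (N%:R)^-1 ->
  0 <= eps -> eps < ln (2 / (N%:R * c)) ->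
  [/\ sup [set eta_TV K | K in @M1 R N eps c] =
        (expR eps - 1) / (expR eps * (1 - N%:R * c) + 1),
      (@M2 R N eps c !=set0 ->
        sup [set eta_TV K | K in @M2 R N eps c] <= sup [set eta_TV K | K in @M1 R N eps c])
    & @M0 R N eps c = set0].
Proof.
move=> N2 c0 cN e0 eL.
have N0 : (0 < N)%N by apply: leq_trans N2.
have Npos : 0 < N%:R :> R by rewrite ltr0n.
have Nc : N%:R * c <= 1.
  by have := ler_wpM2l (ltW Npos) cN; rewrite mulfV // lt0r_neq0.
have ee : 0 < expR eps := expR_gt0 eps.
have e1 : 1 <= expR eps by apply: le_trans (expR_ge1Dx eps); rewrite lerDl.
have den0 : 0 < expR eps * (1 - N%:R * c) + 1.
  apply: ltr_wpDl; [apply: mulr_ge0; [exact: ltW| by rewrite subr_ge0] | exact: ltr01].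
have hD : Dst R N eps c * (expR eps * (1 - N%:R * c) + 1) = expR eps - 1.
  by rewrite /Dst divfK // lt0r_neq0.
have D0 : 0 <= Dst R N eps c by rewrite /Dst divr_ge0 ?subr_ge0 // ltW.
have Nc0 : 0 < N%:R * c by apply: mulr_gt0.
have eL' : expR eps * (N%:R * c) < 2.
  move: eL; rewrite -ltr_expR lnK; last by rewrite posrE divr_gt0.
  by rewrite ltr_pdivlMr.
have D1 : Dst R N eps c < 1.
  rewrite /Dst ltr_pdivrMr // mul1r; nra.
have N1 : (1 < N)%N by exact: N2.
pose i0 : 'I_N := Ordinal N0; pose i1 : 'I_N := Ordinal N1.
have i01 : i0 != i1 by [].
have [K0 [hK0 hKD]] := @witness R N c eps i0 i1 _ i01 c0 Nc D0 D1 hD.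
have ub1 : ubound [set eta_TV K | K in @M1 R N eps c] (Dst R N eps c).
  by move=> _ [K [hM _] <-]; exact: eta_le.
have S1 : sup [set eta_TV K | K in @M1 R N eps c] = Dst R N eps c.
  apply/le_anti/andP; split.
    by apply: ge_sup => //; exists (eta_TV K0), K0.
  apply: le_trans hKD _; apply: sup_upper_bound; last by exists K0.
  by split; [exists (eta_TV K0), K0 | exists (Dst R N eps c)].
split.
- exact: S1.
- move=> [K hK]; rewrite S1; apply: ge_sup; first by exists (eta_TV K), K.
  by move=> _ [K' [[hM _] _] <-]; exact: eta_le.
- rewrite -subset0 => K [[rs hC] [_ hz]].
  have [x0 h0] := hz ord0; have [x1 h1] := hz ord_max.
  have := @key R N K c eps x1 x0 c0 Nc e0 rs hC.
  rewrite h0 => hk; rewrite (@col1 R N K rs) in h1.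
  lra.
Qed.
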